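(* For every $\mathcal{L}_{A}^{\Box}$-formula $\varphi$: $\varphi$ is $\mathsf{K(A)}$-valid if and only if $\varphi$ is valid in all finite serial $\mathsf{K(A)}$-models.
   Context: The language $\mathcal{L}_{A}^{\Box}$ has binary connectives $\wedge,\vee,\&,\to$, a constant $\overline{0}$ and a unary connective $\Box$; formulas are built from a countably infinite set $\mathrm{Var}$ of propositional variables. A $\mathsf{K(A)}$-model $\mathfrak{M}=\langle W,R,V\rangle$ consists of a nonempty set $W$, a relation $R\subseteq W\times W$, and a map $V\colon \mathrm{Var}\times W\to[-r,r]$ for some real $r\ge 0$, extended to all formulas by $V(\varphi\wedge\psi,x)=\min(V(\varphi,x),V(\psi,x))$, $V(\varphi\vee\psi,x)=\max(V(\varphi,x),V(\psi,x))$, $V(\varphi\&\psi,x)=V(\varphi,x)+V(\psi,x)$, $V(\varphi\to\psi,x)=V(\psi,x)-V(\varphi,x)$, $V(\overline{0},x)=0$, and $V(\Box\varphi,x)=\inf_{\mathbb{R}}\{V(\varphi,y): Rxy\}$, with the convention that the infimum of the empty set is $0$. A formula $\varphi$ is valid in $\mathfrak{M}$ if $V(\varphi,x)\ge 0$ for all $x\in W$, and $\mathsf{K(A)}$-valid if it is valid in all $\mathsf{K(A)}$-models. A model is finite if $W$ is finite, and serial if every $x\in W$ has some $y$ with $Rxy$. *)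

(* Defs.v *)
From HB Require Import structures.
From mathcomp Require Import all_boot all_order all_algebra.
From mathcomp Require Import boolp classical_sets reals Rstruct.
Unset Printing Implicit Defensive.
Import Order.TTheory GRing.Theory Num.Theory.
Local Open Scope ring_scope.
Local Open Scope classical_set_scope.

Notation Real := Rdefinitions.R.

Inductive form : Type :=
| FVar : nat -> form
| FAnd : form -> form -> form
| FOr  : form -> form -> form
| FFus : form -> form -> form
| FImp : form -> form -> form
| FZero : form
| FBox : form -> form.

Record model : Type := Model {
  world : Type;
  world_nonempty : inhabited world;
  acc : world -> world -> Prop;
  val : nat -> world -> Real;
  bound : Real;
  bound_ge0 : 0 <= bound;
  val_bounded : forall p x, - bound <= val p x <= bound
}.

(* Infimum in R over a set, with inf of the empty set = 0 (explicit convention). *)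
Definition inf0 (E : set Real) : Real :=
  if E == set0 then 0 else inf E.

Fixpoint eval (M : model) (phi : form) (x : world M) : Real :=
  match phi with
  | FVar p => @val M p x
  | FAnd a b => Num.min (eval M a x) (eval M b x)
  | FOr a b => Num.max (eval M a x) (eval M b x)
  | FFus a b => eval M a x + eval M b x
  | FImp a b => eval M b x - eval M a x
  | FZero => 0
  | FBox a => inf0 [set eval M a y | y in [set y | @acc M x y]]
  end.

Definition valid_in (M : model) (phi : form) : Prop :=
  forall x : world M, 0 <= eval M phi x.

Definition KA_valid (phi : form) : Prop := forall M : model, valid_in M phi.

Definition finite_model (M : model) : Prop :=
  exists l : seq (world M), forall x, List.In x l.

Definition serial_model (M : model) : Prop :=
  forall x : world M, exists y, @acc M x y.

(* Main.v *)
Require Import Defs.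
From HB Require Import structures.
From mathcomp Require Import all_boot all_order all_algebra.
From mathcomp Require Import boolp classical_sets reals Rstruct.
From mathcomp Require Import ring lra.
From Stdlib Require Import ClassicalEpsilon.
Import Defs.
Unset Printing Implicit Defensive.
Import Order.TTheory GRing.Theory Num.Theory.
Local Open Scope ring_scope.
Local Open Scope classical_set_scope.
From mathcomp Require Import zify.

Fixpoint sz (f : form) : nat :=
  match f with
  | FVar _ => 1 | FZero => 1
  | FAnd a b | FOr a b | FFus a b | FImp a b => (sz a + sz b).+1
  | FBox a => (sz a).+1
  end.

Lemma inf0_ne {E : set Real} : E !=set0 -> inf0 E = inf E.
Proof.
move=> [z Ez]; rewrite /inf0; case: eqP => // E0.
by rewrite E0 in Ez.
Qed.

Lemma inf0_const (E : set Real) : E 0 -> (forall z, E z -> z = 0) -> inf0 E = 0.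
Proof.
move=> E0 h; rewrite (inf0_ne (ex_intro _ 0 E0)).
apply/eqP; rewrite eq_le; apply/andP; split.
  apply: ge_inf => //; exists 0 => z /h ->; exact: lexx.
by apply: lb_le_inf; [exists 0 | move=> z /h ->].
Qed.

Lemma inf_geP {E : set Real} {c} : E !=set0 -> (forall z, E z -> c <= z) -> c <= inf E.
Proof. by move=> ne lb; apply: lb_le_inf. Qed.

Lemma inf_leP {E : set Real} {c z} : (forall z, E z -> c <= z) -> E z -> inf E <= z.
Proof. by move=> lb Ez; apply: ge_inf => //; exists c. Qed.

Lemma eval_bound (M : model) psi x :
  - ((sz psi)%:R * bound M) <= eval M psi x <= (sz psi)%:R * bound M.
Proof.
have hB := bound_ge0 M.
elim: psi x => [p|a IHa b IHb|a IHa b IHb|a IHa b IHb|a IHa b IHb| |a IHa] x /=.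
- by rewrite mul1r; apply: val_bounded.
- move: (IHa x) (IHb x) => /andP[a1 a2] /andP[b1 b2].
  rewrite -addn1 !natrD !mulrDl mul1r.
  apply/andP; split; first by rewrite le_min; apply/andP; split; lra.
  by rewrite ge_min; apply/orP; left; lra.
- move: (IHa x) (IHb x) => /andP[a1 a2] /andP[b1 b2].
  rewrite -addn1 !natrD !mulrDl mul1r.
  apply/andP; split; first by rewrite le_max; apply/orP; left; lra.
  by rewrite ge_max; apply/andP; split; lra.
- move: (IHa x) (IHb x) => /andP[a1 a2] /andP[b1 b2].
  rewrite -addn1 !natrD !mulrDl mul1r.
  apply/andP; split; lra.
- move: (IHa x) (IHb x) => /andP[a1 a2] /andP[b1 b2].
  rewrite -addn1 !natrD !mulrDl mul1r.
  apply/andP; split; lra.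
- rewrite mul1r; apply/andP; split; lra.
- rewrite -addn1 natrD mulrDl mul1r.
  set E := [set _ | _ in _].
  have lb : forall z, E z -> - ((sz a)%:R * bound M) <= z.
    by move=> z [y _ <-]; case/andP: (IHa y).
  have hs : 0 <= (sz a)%:R * bound M by apply: mulr_ge0.
  have [ne|e0] := pselect (E !=set0).
  + rewrite inf0_ne //; apply/andP; split.
      by have := inf_geP ne lb; lra.
    case: (ne) => z Ez; have := inf_leP lb Ez.
    by case: Ez => y _ <-; case/andP: (IHa y) => _ h1 h2; lra.
  + rewrite /inf0; case: eqP => [_|]; first by apply/andP; split; lra.
    move=> h; exfalso; apply: e0; apply/set0P; apply/eqP; exact: h.
Qed.

Lemma has_lb_img (M : model) psi (P : set (world M)) :
  forall z, [set eval M psi y | y in P] z -> - ((sz psi)%:R * bound M) <= z.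
Proof. by move=> z [y _ <-]; case/andP: (eval_bound M psi y). Qed.

Fixpoint md (f : form) : nat :=
  match f with
  | FVar _ => 0 | FZero => 0
  | FAnd a b | FOr a b | FFus a b | FImp a b => maxn (md a) (md b)
  | FBox a => (md a).+1
  end.

Fixpoint boxes (f : form) : list form :=
  match f with
  | FVar _ => nil | FZero => nil
  | FAnd a b | FOr a b | FFus a b | FImp a b => List.app (boxes a) (boxes b)
  | FBox a => a :: boxes a
  end.

Fixpoint okF (F : list form) (f : form) : Prop :=
  match f with
  | FVar _ => True | FZero => True
  | FAnd a b | FOr a b | FFus a b | FImp a b => okF F a /\ okF F b
  | FBox a => List.In a F /\ okF F a
  end.

Lemma okF_incl F psi : (forall a, List.In a (boxes psi) -> List.In a F) -> okF F psi.
Proof.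
elim: psi => //= [a IHa b IHb|a IHa b IHb|a IHa b IHb|a IHa b IHb|a IHa] H;
  try by split; [apply: IHa|apply: IHb] => c Hc; apply: H; apply: List.in_or_app; tauto.
split; first by apply: H; left.
by apply: IHa => c Hc; apply: H; right.
Qed.

Definition BoxSet (M : model) psi (u : world M) :=
  [set eval M psi y | y in [set y | @acc M u y]].

Definition ch (M : model) (eps : Real) (F : list form) (u : world M) (i : nat) : world M :=
  epsilon (inhabits u) (fun v => @acc M u v /\
     eval M (List.nth i F FZero) v <= inf0 (BoxSet M (List.nth i F FZero) u) + eps).

Lemma ch_spec (M : model) eps F u i : 0 < eps -> (exists v, @acc M u v) ->
  @acc M u (ch M eps F u i) /\
  eval M (List.nth i F FZero) (ch M eps F u i) <= inf0 (BoxSet M (List.nth i F FZero) u) + eps /\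
  inf0 (BoxSet M (List.nth i F FZero) u) = inf (BoxSet M (List.nth i F FZero) u).
Proof.
move=> he [v hv].
set psi := List.nth i F FZero.
have ne : BoxSet M psi u !=set0 by exists (eval M psi v); exists v.
have hi := inf0_ne ne.
have [z Ez zlt] : exists2 z, BoxSet M psi u z & z < inf (BoxSet M psi u) + eps.
  apply: inf_adherent => //; split => //; exists (- ((sz psi)%:R * bound M)).
  exact: has_lb_img.
have := @epsilon_spec _ (inhabits u) (fun v => @acc M u v /\
     eval M psi v <= inf0 (BoxSet M psi u) + eps).
case.
  case: Ez => y hy ey; exists y; split => //; rewrite hi ey; exact: ltW.
move=> h1 h2; split => //; split => //.
Qed.

Lemma In_nth_seq (F : list form) a : List.In a F -> exists n, (n < size F)%N /\ List.nth n F FZero = a.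
Proof.
elim: F => //= b F IH [->|h]; first by exists 0%N.
by case: (IH h) => n [h1 h2]; exists n.+1.
Qed.

Definition node (d m : nat) : finType := option ('I_d.+1 * {ffun 'I_d.+1 -> 'I_m.+1}).

Definition gg d m (t : {ffun 'I_d.+1 -> 'I_m.+1}) (n : nat) : nat := t (inord n).

Arguments gg {d m}.

Fixpoint wp (M : model) eps F d (x : world M) (t : {ffun 'I_d.+1 -> 'I_(size F).+1}) (n : nat)
  : world M :=
  match n with
  | 0 => x
  | n'.+1 => ch M eps F (wp M eps F d x t n') (gg t n')
  end.

Lemma wp_prefix M eps F d x t t' k :
  (forall n, (n < k)%N -> gg t n = gg t' n) -> wp M eps F d x t k = wp M eps F d x t' k.
Proof.
elim: k => //= k IH H.
rewrite IH; last by move=> n hn; apply: H; apply: ltnW.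
by rewrite H.
Qed.

Arguments wp_prefix {M eps F d x t t' k}.

Section Tree.
Context (M : model) (eps : Real) (F : list form) (d : nat) (x : world M).
Local Notation N := (node d (size F)).
Local Notation w := (wp M eps F d x).

Definition accN (a b : N) : Prop :=
  match a, b with
  | Some (k, t), Some (k', t') =>
      (k' : nat) = k.+1 /\ (forall n, (n < k)%N -> gg t n = gg t' n) /\
      exists v, @acc M (w t k) v
  | Some (k, t), None => (k : nat) = d \/ ~ exists v, @acc M (w t k) v
  | None, None => True
  | None, Some _ => False
  end.

Definition valN (p : nat) (a : N) : Real :=
  match a with Some (k, t) => val M p (w t k) | None => 0 end.

Lemma valN_bounded p a : - bound M <= valN p a <= bound M.
Proof.
case: a => [[k t]|] /=; first exact: val_bounded.
have := bound_ge0 M; move=> h; apply/andP; split; lra.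
Qed.

Definition NM : model := @Model N (inhabits None) accN valN (bound M) (bound_ge0 M) valN_bounded.


Lemma evalN_None psi : eval NM psi None = 0.
Proof.
elim: psi => //= [a -> b ->|a -> b ->|a -> b ->|a -> b ->|a IHa].
- by rewrite minxx.
- by rewrite maxxx.
- by rewrite addr0.
- by rewrite subr0.
apply: inf0_const; first by exists None.
by move=> z [[y|] hy <-].
Qed.

Lemma approx psi : 0 < eps -> okF F psi -> forall (k : 'I_d.+1) t, (md psi + k <= d)%N ->
  eval M psi (w t k) - (sz psi)%:R * eps <= eval NM psi (Some (k, t)) <=
  eval M psi (w t k) + (sz psi)%:R * eps.
Proof.
move=> he.
elim: psi => [p|a IHa b IHb|a IHa b IHb|a IHa b IHb|a IHa b IHb| |a IHa] /=.
- move=> _ k t _; rewrite mul1r; apply/andP; split; lra.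
- move=> [oa ob] k t hk.
  move: (IHa oa k t ltac:(lia)) (IHb ob k t ltac:(lia)) => /andP[a1 a2] /andP[b1 b2].
  have ha : 0 <= (sz a)%:R * eps by apply: mulr_ge0 => //; exact: ltW.
  have hb : 0 <= (sz b)%:R * eps by apply: mulr_ge0 => //; exact: ltW.
  rewrite -[(sz a + sz b).+1]addn1 !natrD !mulrDl mul1r.
  case: (leP (eval M a (w t k)) (eval M b (w t k))) => h1;
  case: (leP (eval NM a (Some (k, t))) (eval NM b (Some (k, t)))) => h2;
  apply/andP; split; lra.
- move=> [oa ob] k t hk.
  move: (IHa oa k t ltac:(lia)) (IHb ob k t ltac:(lia)) => /andP[a1 a2] /andP[b1 b2].
  have ha : 0 <= (sz a)%:R * eps by apply: mulr_ge0 => //; exact: ltW.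
  have hb : 0 <= (sz b)%:R * eps by apply: mulr_ge0 => //; exact: ltW.
  rewrite -[(sz a + sz b).+1]addn1 !natrD !mulrDl mul1r.
  case: (leP (eval M a (w t k)) (eval M b (w t k))) => h1;
  case: (leP (eval NM a (Some (k, t))) (eval NM b (Some (k, t)))) => h2;
  apply/andP; split; lra.
- move=> [oa ob] k t hk.
  move: (IHa oa k t ltac:(lia)) (IHb ob k t ltac:(lia)) => /andP[a1 a2] /andP[b1 b2].
  rewrite -[(sz a + sz b).+1]addn1 !natrD !mulrDl mul1r.
  apply/andP; split; lra.
- move=> [oa ob] k t hk.
  move: (IHa oa k t ltac:(lia)) (IHb ob k t ltac:(lia)) => /andP[a1 a2] /andP[b1 b2].
  rewrite -[(sz a + sz b).+1]addn1 !natrD !mulrDl mul1r.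
  apply/andP; split; lra.
- move=> _ k t _; rewrite mul1r; apply/andP; split; lra.
move=> [inF oa] k t hk.
have hkd : (k < d)%N by lia.
have ea0 : 0 <= (sz a)%:R * eps by apply: mulr_ge0 => //; exact: ltW.
rewrite -[(sz a).+1]addn1 natrD mulrDl mul1r.
set u := w t k.
have [hs|nhs] := pselect (exists v, @acc M u v).
  have [n0 [hn0 en0]] := In_nth_seq _ _ inF.
  have chs : forall i, @acc M u (ch M eps F u i) by move=> i; case: (ch_spec M eps F u i he hs).
  have [_ [hch hinf]] := ch_spec M eps F u n0 he hs.
  rewrite /BoxSet en0 in hch hinf; rewrite hinf.
  set SM := [set eval M a y | y in _] in hch *.
  have lbM : forall z, SM z -> - ((sz a)%:R * bound M) <= z by apply: has_lb_img.
  set SN := [set eval NM a y | y in _].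
  have kk : ((inord k.+1 : 'I_d.+1) : nat) = k.+1 by rewrite inordK //; lia.
  have lbN : forall z, SN z -> inf SM - (sz a)%:R * eps <= z.
    move=> z [[[k' t']|] hy <-]; last first.
      by case: hy => h; [lia | exfalso; apply: h].
    case: hy => hk' [hpre _].
    have := IHa oa k' t' ltac:(lia); case/andP => h1 _.
    suff : inf SM <= eval M a (w t' k') by lra.
    rewrite hk' /= -(wp_prefix hpre) -/u.
    by apply: (inf_leP lbM); exists (ch M eps F u (gg t' k)) => //; apply: chs.
  pose t' : {ffun 'I_d.+1 -> 'I_(size F).+1} :=
    [ffun j => if j == inord k then inord n0 else t j].
  have hpre : forall n, (n < k)%N -> gg t n = gg t' n.
    move=> n hn; rewrite /gg ffunE; case: eqP => // /(congr1 (@nat_of_ord _)).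
    by rewrite !inordK //; lia.
  have hg : gg t' k = n0 by rewrite /gg ffunE eqxx inordK //; lia.
  have Nb : SN (eval NM a (Some (inord k.+1, t'))).
    by exists (Some (inord k.+1, t')) => //=; split => //; split.
  have := IHa oa (inord k.+1) t' ltac:(lia); case/andP => _.
  rewrite kk /= -(wp_prefix hpre) -/u hg => hb.
  rewrite inf0_ne; last by exists (eval NM a (Some (inord k.+1, t'))).
  have := inf_geP (ex_intro _ _ Nb) lbN.
  have := inf_leP lbN Nb.
  move=> h1 h2; apply/andP; split; lra.
have -> : inf0 [set eval M a y | y in [set y | @acc M u y]] = 0.
  rewrite /inf0; case: eqP => // hne; exfalso; apply: hne.
  apply/seteqP; split => z //= [y hy _]; apply: nhs; by exists y.
rewrite inf0_const.
- apply/andP; split; lra.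
- exists None; last exact: evalN_None.
  by right.
- move=> z [[[k' t']|] hy <-]; last exact: evalN_None.
  by case: hy => _ [_ hv]; exfalso; apply: nhs.
Qed.

End Tree.

Lemma mem_In (T : eqType) (y : T) (s : seq T) : y \in s -> List.In y s.
Proof.
elim: s => //= z s IH; rewrite in_cons => /orP[/eqP ->|h]; [by left|by right; apply: IH].
Qed.

Lemma NM_finite M eps F d x : finite_model (NM M eps F d x).
Proof. by exists (enum (node d (size F))) => y; apply: mem_In; rewrite mem_enum. Qed.

Lemma NM_serial M eps F d x : serial_model (NM M eps F d x).
Proof.
move=> [[k t]|]; last by exists None.
have [hs|nhs] := pselect (exists v, @acc M (wp M eps F d x t k) v); last by exists None; right.
have [kd|kd] := eqVneq (k : nat) d; first by exists None; left.
have kd' : (k < d)%N by have := ltn_ord k; lia.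
exists (Some (inord k.+1, t)); split; first by rewrite inordK //; lia.
by split.
Qed.

Lemma sz_pos psi : (0 < sz psi)%N.
Proof. by case: psi. Qed.

Theorem lemma2p1 (phi : form) :
  KA_valid phi <->
  (forall M : model, finite_model M -> serial_model M -> valid_in M phi).
Proof.
split; first by move=> H M _ _; apply: H.
move=> H M x; rewrite leNgt; apply/negP => hlt.
set v := eval M phi x in hlt.
have s0 : 0 < (sz phi)%:R :> Real by rewrite ltr0n sz_pos.
pose eps := - v / (2 * (sz phi)%:R).
have he : 0 < eps by apply: divr_gt0; lra.
pose F := boxes phi; pose d := md phi.
pose t0 : {ffun 'I_d.+1 -> 'I_(size F).+1} := [ffun _ => ord0].
have hmd : (md phi + (@ord0 d : nat) <= d)%N by rewrite addn0.
have := approx M eps F d x phi he (okF_incl F phi (fun a h => h)) ord0 t0 hmd.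
case/andP => _ h2.
have e : (sz phi)%:R * eps = - v / 2.
  have sn : (sz phi)%:R != 0 :> Real by rewrite gt_eqF.
  rewrite /eps; field.
  exact: sn.
have := H (NM M eps F d x) (NM_finite M eps F d x) (NM_serial M eps F d x) (Some (ord0, t0)).
rewrite /= in h2; rewrite e in h2.
rewrite -/v in h2; lra.
Qed.
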